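(* The map $\alpha:V_1\to Nat(id_{{^\mathscr C}Ctr},S_\psi T_\psi)$ sending $\sigma$ to the natural transformation $\tau$ with $\tau(\mathcal M)(X):\mathcal M(X)\xrightarrow{(\sigma_X,\mathcal M(X))}(A,\mathscr C(X,X),\mathcal M(X))\xrightarrow{(A,\pi_{XX})}(A,\mathcal M(X))$, and the map $\beta$ sending $\tau$ to $\sigma$ determined by $(\sigma_X,U)=\tau(\mathcal H_X^U)(X)\circ(\epsilon_X,U)$ for all $U\in Vect_K$, are mutually inverse isomorphisms. In particular $V_1\cong Nat(id_{{^\mathscr C}Ctr},S_\psi T_\psi)$.
   Context: $K$ is a field, $(U',U):=Hom_K(U',U)$, with iterated homs $(L_k,\dots,L_1):=(L_k,(L_{k-1},(\dots(L_2,L_1))))$ identified via hom-tensor adjunction. $\mathscr C$ is a coalgebra with several objects ($\delta_{XYZ}:\mathscr C(X,Z)\to\mathscr C(Y,Z)\otimes\mathscr C(X,Y)$, $f\mapsto f_{Y1}\otimes f_{Y2}$, counits $\epsilon_X$). $(\mathscr C,A,\psi)$ is an entwining structure: $A$ a $K$-algebra, $\psi_{XY}:\mathscr C(X,Y)\otimes A\to A\otimes\mathscr C(X,Y)$, $f\otimes a\mapsto a_\psi\otimes f^\psi$, with $a_\psi\otimes\delta_{XYZ}(f^\psi)=a_{\psi\psi}\otimes f_{Y1}^\psi\otimes f_{Y2}^\psi$, $(ab)_\psi\otimes f^\psi=a_\psi b_\psi\otimes f^{\psi\psi}$, $\psi(f\otimes1)=1\otimes f$, $a_\psi\epsilon_Z(g^\psi)=\epsilon_Z(g)a$.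 ${^\mathscr C}Ctr$ is the category of left $\mathscr C$-contramodules $(\mathcal M,\pi)$, $\pi_{XY}:(\mathscr C(X,Y),\mathcal M(Y))\to\mathcal M(X)$ (coassociative and counital), and ${_A^{\mathscr C}}Ctr(\psi)$ the category of entwined contramodules (contramodules with left $A$-module structures $\mu_X:\mathcal M(X)\to(A,\mathcal M(X))$ with $\mu_X\circ\pi_{XY}=(A,\pi_{XY})\circ(\psi_{XY},\mathcal M(Y))\circ(\mathscr C(X,Y),\mu_Y)$). $S_\psi$ is the forgetful functor and $T_\psi(\mathcal M)(X)=(A,\mathcal M(X))$ with contramodule structure $(A,\pi_{XY})\circ(\psi_{XY},\mathcal M(Y))$ and $A$-action from multiplication; $(S_\psi,T_\psi)$ is adjoint. $\mathcal H_X^U(Y)=(\mathscr C(Y,X),U)$ with structure maps induced by $\delta_{YZX}$. $V_1$ is the space of collections $\sigma=\{\sigma_X:\mathscr C(X,X)\otimes A\to K\}_{X}$ with $\sigma_Y(f_{Y1}\otimes a_\psi)f_{Y2}^\psi=\sigma_X(f_{X2}\otimes a)f_{X1}$ in $\mathscr C(X,Y)$ for all $f\in\mathscr C(X,Y)$, $a\in A$. *)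

(* Defs.v *)
From HB Require Import structures.
From mathcomp Require Import all_boot all_algebra.
From mathcomp Require Import boolp classical_sets functions.
Set Implicit Arguments. Unset Strict Implicit. Unset Printing Implicit Defensive.
Import GRing.Theory.
Local Open Scope ring_scope.

Section Hom.
Variables (K : fieldType) (U V : lmodType K).
Definition linb (f : U -> V) : bool := `[< linear f >].
Record khom := Hom { hom_fun :> U -> V; hom_lin : linb hom_fun }.
HB.instance Definition _ := [isSub for hom_fun].
HB.instance Definition _ := [Choice of khom by <:].

Lemma linb_submod : submod_closed linb.
Proof.
split.
  by apply/asboolP => a x y /=; rewrite ?fctE scaler0 addr0.
move=> k f g /asboolP lf /asboolP lg; apply/asboolP => a x y /=.
rewrite !fctE lf lg !scalerDr !scalerA [k * a]mulrC.
by rewrite -!addrA; congr (_ + _); rewrite addrCA.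
Qed.
HB.instance Definition _ := GRing.isSubmodClosed.Build K (U -> V) linb linb_submod.
HB.instance Definition _ := [SubChoice_isSubLmodule of khom by <:].

Definition hom_of (h : U -> V) : khom := insubd (0 : khom) h.
End Hom.

Arguments hom_of {K U V} h.

Definition bilin (K : fieldType) (U V W : lmodType K) (b : U -> V -> W) : Prop :=
  (forall x, linear (b x)) /\ (forall y, linear (fun x => b x y)).

Definition trilin (K : fieldType) (U V P W : lmodType K) (t : U -> V -> P -> W)
  : Prop :=
  [/\ (forall x y, linear (t x y)), (forall x z, linear (fun y => t x y z))
    & (forall y z, linear (fun x => t x y z))].

(* Elements of a tensor product U (x) V are written as finite formal sums,   *)
(* i.e. sequences of pairs (Sweedler notation); two such expressions denote  *)
(* the same tensor iff every bilinear map (into any K-space) takes the same  *)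
(* value on them.  All axioms below are stated through arbitrary multilinear *)
(* maps, which is exactly equality in the (iterated) tensor product.         *)

Local Unset Implicit Arguments.
Section Entwining.
Variables (K : fieldType) (A : algType K) (Obj : Type)
  (C : Obj -> Obj -> lmodType K)
  (delta : forall X Y Z : Obj, C X Z -> seq (C Y Z * C X Y))
  (eps : forall X : Obj, C X X -> K)
  (psi : forall X Y : Obj, C X Y -> A -> seq (A * C X Y)).

Definition coalgebra_axioms : Prop :=
  [/\
      (forall X, linear (eps X : C X X -> K^o)),
      (forall (X Y Z : Obj) (W : lmodType K) (b : C Y Z -> C X Y -> W),
          bilin b -> linear (fun f => \sum_(p <- delta X Y Z f) b p.1 p.2)),
      (forall (X Y Z V : Obj) (W : lmodType K)
              (t : C Z V -> C Y Z -> C X Y -> W), trilin t ->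
         forall f : C X V,
           \sum_(p <- delta X Y V f) \sum_(q <- delta Y Z V p.1) t q.1 q.2 p.2
         = \sum_(p <- delta X Z V f) \sum_(q <- delta X Y Z p.2) t p.1 q.1 q.2)
    &
      (forall (X Y : Obj) (f : C X Y),
         \sum_(p <- delta X Y Y f) eps Y p.1 *: p.2 = f /\
         \sum_(p <- delta X X Y f) eps X p.2 *: p.1 = f)].

Definition entwining_axioms : Prop :=
  coalgebra_axioms /\
  [/\
      (forall (X Y : Obj) (W : lmodType K) (b : A -> C X Y -> W), bilin b ->
         bilin (fun (f : C X Y) (a : A) => \sum_(p <- psi X Y f a) b p.1 p.2)),
      (forall (X Y Z : Obj) (W : lmodType K) (t : A -> C Y Z -> C X Y -> W),
         trilin t -> forall (f : C X Z) (a : A),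
           \sum_(p <- psi X Z f a) \sum_(q <- delta X Y Z p.2) t p.1 q.1 q.2
         = \sum_(p <- delta X Y Z f) \sum_(q <- psi X Y p.2 a)
              \sum_(r <- psi Y Z p.1 q.1) t r.1 r.2 q.2),
      (forall (X Y : Obj) (W : lmodType K) (b : A -> C X Y -> W), bilin b ->
         forall (f : C X Y) (a a' : A),
           \sum_(p <- psi X Y f (a * a')) b p.1 p.2
         = \sum_(p <- psi X Y f a) \sum_(q <- psi X Y p.2 a') b (p.1 * q.1) q.2),
      (forall (X Y : Obj) (W : lmodType K) (b : A -> C X Y -> W), bilin b ->
         forall f : C X Y, \sum_(p <- psi X Y f 1) b p.1 p.2 = b 1 f)
    &
      (forall (Z : Obj) (g : C Z Z) (a : A),
         \sum_(p <- psi Z Z g a) eps Z p.2 *: p.1 = eps Z g *: a)].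

(* Left C-contramodules: M(X) a K-space, pi_{XY} : (C(X,Y), M(Y)) -> M(X).  *)
Record contramod := Contra {
  cM : Obj -> lmodType K;
  cpi : forall X Y : Obj, khom (khom (C X Y) (cM Y)) (cM X) }.

Definition is_contra (M : contramod) : Prop :=
  (* coassociativity, with (C(X,Y),C(Y,Z),M(Z)) = (C(Y,Z) (x) C(X,Y), M(Z)) *)
  (forall (X Y Z : Obj) (g : khom (C X Y) (khom (C Y Z) (cM M Z))),
     cpi M X Y (hom_of (fun c : C X Y => cpi M Y Z (g c)))
     = cpi M X Z (hom_of (fun f : C X Z =>
                     \sum_(p <- delta X Y Z f) g p.2 p.1))) /\
  (forall (X : Obj) (m : cM M X),
     cpi M X X (hom_of (fun f : C X X => eps X f *: m)) = m).

Definition is_contra_morph (M N : contramod) (phi : forall X, khom (cM M X) (cM N X))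
  : Prop :=
  forall (X Y : Obj) (g : khom (C X Y) (cM M Y)),
    phi X (cpi M X Y g) = cpi N X Y (hom_of (fun c : C X Y => phi Y (g c))).

(* S_psi T_psi (M): X |-> (A, M(X)) with structure (A, pi_{XY}) o (psi_{XY}, M(Y)) *)
Definition ST (M : contramod) : contramod :=
  Contra (fun X => khom A (cM M X))
    (fun X Y => hom_of (fun G : khom (C X Y) (khom A (cM M Y)) =>
       hom_of (fun a : A =>
         cpi M X Y (hom_of (fun c : C X Y =>
            \sum_(p <- psi X Y c a) G p.2 p.1))))).

(* H_X^U : Y |-> (C(Y,X), U), structure induced by delta_{YZX} *)
Definition Hc (X : Obj) (U : lmodType K) : contramod :=
  Contra (fun Y => khom (C Y X) U)
    (fun Y Z => hom_of (fun g : khom (C Y Z) (khom (C Z X) U) =>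
       hom_of (fun f : C Y X => \sum_(p <- delta Y Z X f) g p.2 p.1))).

Definition natT := forall (M : contramod) (X : Obj), khom (cM M X) (khom A (cM M X)).

Definition is_nat (tau : natT) : Prop :=
  (forall M : contramod, is_contra M -> is_contra_morph M (ST M) (tau M))
  /\
  (forall (M N : contramod) (phi : forall X, khom (cM M X) (cM N X)),
     is_contra M -> is_contra N -> is_contra_morph M N phi ->
     forall (X : Obj) (m : cM M X) (a : A),
       tau N X (phi X m) a = phi X (tau M X m a)).

(* V_1: sigma_X : C(X,X) (x) A -> K, i.e. bilinear maps C(X,X) x A -> K *)
Definition sigmaT := forall X : Obj, C X X -> A -> K.

Definition is_V1 (sigma : sigmaT) : Prop :=
  (forall X, bilin (sigma X : C X X -> A -> K^o)) /\
  (forall (X Y : Obj) (f : C X Y) (a : A),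
     \sum_(p <- delta X Y Y f) \sum_(q <- psi X Y p.2 a) sigma Y p.1 q.1 *: q.2
     = \sum_(p <- delta X X Y f) sigma X p.2 a *: p.1).

Definition alpha (sigma : sigmaT) : natT :=
  fun M X => hom_of (fun m : cM M X =>
    hom_of (fun a : A =>
      cpi M X X (hom_of (fun f : C X X => sigma X f a *: m)))).

Definition eps_hom (X : Obj) (U : lmodType K) (u : U) : khom (C X X) U :=
  hom_of (fun c : C X X => eps X c *: u).

(* beta(tau): the case U = K of (sigma_X, U) = tau(H_X^U)(X) o (eps_X, U) *)
Definition beta (tau : natT) : sigmaT :=
  fun X f a => (tau (Hc X K^o) X (eps_hom X K^o 1) : khom A (khom (C X X) K^o)) a f.

End Entwining.

(* Main.v *)
Require Import Defs.
From HB Require Import structures.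
From mathcomp Require Import all_boot all_algebra.
From mathcomp Require Import boolp classical_sets functions.
From mathcomp Require Import ring.
Set Implicit Arguments. Unset Strict Implicit.
Import GRing.Theory.
Local Open Scope ring_scope.

Section HomLemmas.
Variables (K : fieldType).

Lemma hom_ofE (U V : lmodType K) (h : U -> V) : linear h -> forall x, hom_of h x = h x.
Proof. by move=> lh x; rewrite /hom_of insubdK //; apply/asboolP. Qed.

Lemma homP (U V : lmodType K) (f g : khom U V) : (forall x, f x = g x) -> f = g.
Proof. by move=> e; apply: val_inj; apply: funext. Qed.

Lemma hom_of_ext (U V : lmodType K) (h1 h2 : U -> V) :
  (forall x, h1 x = h2 x) -> hom_of h1 = hom_of h2.
Proof. by move=> e; congr hom_of; apply: funext. Qed.

Lemma homL (U V : lmodType K) (f : khom U V) : linear f.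
Proof. by apply/asboolP; case: f. Qed.

Lemma homDZ (U V : lmodType K) (f : khom U V) k x y : f (k *: x + y) = k *: f x + f y.
Proof. exact: homL. Qed.

Lemma hom0 (U V : lmodType K) (f : khom U V) : f 0 = 0.
Proof.
have := homDZ f 1 0 0; rewrite !scale1r !addr0 => e.
by apply: (addrI (f 0)); rewrite addr0 -e.
Qed.

Lemma homD (U V : lmodType K) (f : khom U V) x y : f (x + y) = f x + f y.
Proof. by have := homDZ f 1 x y; rewrite !scale1r. Qed.

Lemma homZ (U V : lmodType K) (f : khom U V) k x : f (k *: x) = k *: f x.
Proof. by rewrite -[k *: x]addr0 homDZ hom0 addr0. Qed.

Lemma hom_sum (U V : lmodType K) (f : khom U V) I (s : seq I) (F : I -> U) :
  f (\sum_(i <- s) F i) = \sum_(i <- s) f (F i).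
Proof.
elim: s => [|i s IH]; first by rewrite !big_nil hom0.
by rewrite !big_cons homD IH.
Qed.

Lemma evalDZ (U V : lmodType K) (f g : khom U V) k x : (k *: f + g) x = k *: f x + g x.
Proof. by []. Qed.
Lemma evalD (U V : lmodType K) (f g : khom U V) x : (f + g) x = f x + g x.
Proof. by []. Qed.
Lemma evalZ (U V : lmodType K) (f : khom U V) k x : (k *: f) x = k *: f x.
Proof. by []. Qed.
Lemma eval0 (U V : lmodType K) x : (0 : khom U V) x = 0.
Proof. by []. Qed.

Lemma eval_sum (U V : lmodType K) I (s : seq I) (F : I -> khom U V) x :
  (\sum_(i <- s) F i) x = \sum_(i <- s) F i x.
Proof.
elim: s => [|i s IH]; first by rewrite !big_nil.
by rewrite !big_cons evalD IH.
Qed.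

Lemma lin0 (U V : lmodType K) (f : U -> V) : linear f -> f 0 = 0.
Proof. by move=> lf; rewrite -(hom_ofE lf) hom0. Qed.
Lemma linZ (U V : lmodType K) (f : U -> V) : linear f -> forall k x, f (k *: x) = k *: f x.
Proof. by move=> lf k x; rewrite -(hom_ofE lf) homZ hom_ofE. Qed.
Lemma linD (U V : lmodType K) (f : U -> V) : linear f -> forall x y, f (x + y) = f x + f y.
Proof. by move=> lf x y; rewrite -(hom_ofE lf) homD !hom_ofE. Qed.
Lemma lin_sum (U V : lmodType K) (f : U -> V) : linear f ->
  forall I (s : seq I) (F : I -> U), f (\sum_(i <- s) F i) = \sum_(i <- s) f (F i).
Proof.
by move=> lf I s F; rewrite -(hom_ofE lf) hom_sum; apply: eq_bigr => i _; rewrite hom_ofE.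
Qed.

Lemma bilin_flip (P Q R : lmodType K) (g : khom P (khom Q R)) :
  bilin (fun (q : Q) (p : P) => g p q).
Proof.
split=> [q k x y|p k x y] /=; first by rewrite homDZ.
by rewrite homDZ.
Qed.

Lemma lin_hom_of (W U V : lmodType K) (F : W -> U -> V) :
  (forall w, linear (F w)) -> (forall u, linear (fun w => F w u)) ->
  linear (fun w => hom_of (F w)).
Proof.
move=> l1 l2 k x y; apply: homP => u.
by rewrite evalDZ !hom_ofE //; apply: l2.
Qed.

Lemma lin_comp (U V W : lmodType K) (f : khom V W) (g : khom U V) :
  linear (fun x => f (g x)).
Proof. by move=> k x y; rewrite !homDZ. Qed.

Lemma lin_sumf (U V : lmodType K) I (s : seq I) (F : I -> U -> V) :
  (forall i, linear (F i)) -> linear (fun x => \sum_(i <- s) F i x).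
Proof.
move=> lF k x y; rewrite scaler_sumr -big_split /=.
by apply: eq_bigr => i _; rewrite lF.
Qed.

End HomLemmas.
Unset Implicit Arguments.
Section Ent.
Variables (K : fieldType) (A : algType K) (Obj : Type)
  (C : Obj -> Obj -> lmodType K)
  (delta : forall X Y Z : Obj, C X Z -> seq (C Y Z * C X Y))
  (eps : forall X : Obj, C X X -> K)
  (psi : forall X Y : Obj, C X Y -> A -> seq (A * C X Y)).
Hypothesis Hent : entwining_axioms K A Obj C delta eps psi.
Set Implicit Arguments. Unset Strict Implicit.

Local Notation cM := (cM K Obj C).
Local Notation cpi := (cpi K Obj C).
Local Notation Hc := (Hc K Obj C delta).
Local Notation ST := (ST K A Obj C psi).
Local Notation is_contra := (is_contra K Obj C delta eps).
Local Notation is_contra_morph := (is_contra_morph K Obj C).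
Local Notation eps_hom := (eps_hom K Obj C eps).

Lemma epsL X : linear (eps X : C X X -> K^o).
Proof. by case: Hent => [[]]. Qed.

Lemma deltaL X Y Z (W : lmodType K) (b : C Y Z -> C X Y -> W) :
  bilin b -> linear (fun f => \sum_(p <- delta X Y Z f) b p.1 p.2).
Proof. by case: Hent => [[_ H _ _] _]; apply: H. Qed.

Lemma coassoc (X Y Z V : Obj) (W : lmodType K)
   (t : C Z V -> C Y Z -> C X Y -> W) : trilin t -> forall f : C X V,
   \sum_(p <- delta X Y V f) \sum_(q <- delta Y Z V p.1) t q.1 q.2 p.2
 = \sum_(p <- delta X Z V f) \sum_(q <- delta X Y Z p.2) t p.1 q.1 q.2.
Proof. by case: Hent => [[_ _ H _] _]; apply: H. Qed.

Lemma counitL (X Y : Obj) (f : C X Y) :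
  \sum_(p <- delta X Y Y f) eps Y p.1 *: p.2 = f.
Proof. by case: Hent => [[_ _ _ H] _]; case: (H X Y f). Qed.

Lemma counitR (X Y : Obj) (f : C X Y) :
  \sum_(p <- delta X X Y f) eps X p.2 *: p.1 = f.
Proof. by case: Hent => [[_ _ _ H] _]; case: (H X Y f). Qed.

Lemma psiB (X Y : Obj) (W : lmodType K) (b : A -> C X Y -> W) : bilin b ->
  bilin (fun (f : C X Y) (a : A) => \sum_(p <- psi X Y f a) b p.1 p.2).
Proof. by case: Hent => [_ [H _ _ _ _]]; apply: H. Qed.

Lemma eps_homE X (U : lmodType K) (u : U) c : eps_hom X U u c = eps X c *: u.
Proof.
rewrite /Defs.eps_hom hom_ofE // => k x y.
by rewrite (@epsL X) scalerDl scalerA.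
Qed.

Lemma eps_homL X (U : lmodType K) : linear (eps_hom X U).
Proof.
move=> k x y; apply: homP => c.
by rewrite evalDZ !eps_homE scalerDr !scalerA mulrC.
Qed.

Lemma Hc_inner_lin (X Y Z : Obj) (U : lmodType K)
  (g : khom (C Y Z) (khom (C Z X) U)) :
  linear (fun f : C Y X => \sum_(p <- delta Y Z X f) g p.2 p.1).
Proof. exact: (deltaL (bilin_flip g)). Qed.

Lemma Hc_piE (X : Obj) (U : lmodType K) Y Z (g : khom (C Y Z) (khom (C Z X) U)) f :
  cpi (Hc X U) Y Z g f = \sum_(p <- delta Y Z X f) g p.2 p.1.
Proof.
rewrite /= hom_ofE; first by rewrite hom_ofE //; apply: Hc_inner_lin.
apply: lin_hom_of; first by move=> w; apply: Hc_inner_lin.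
move=> u k x y /=; rewrite scaler_sumr -big_split /=.
apply: eq_bigr => p _.
by [].
Qed.


Lemma Hc_contra (X : Obj) (U : lmodType K) : is_contra (Hc X U).
Proof.
split.
  move=> Y Z W g; apply: homP => h.
  rewrite !Hc_piE.
  have lc : linear (fun c : C Y Z => cpi (Hc X U) Z W (g c)) by apply: lin_comp.
  have li : linear (fun f : C Y W => \sum_(p <- delta Y Z W f) g p.2 p.1).
    exact: (deltaL (bilin_flip g)).
  under eq_bigr => p _ do rewrite hom_ofE // Hc_piE.
  under [RHS]eq_bigr => p _ do rewrite hom_ofE // eval_sum.
  pose t := fun (z : C W X) (y : C Z W) (x : C Y Z) => g x y z.
  have tl : trilin t.
    split=> [x y|x z|y z] k a b; rewrite /t.
    - by rewrite homDZ.
    - by rewrite homDZ.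
    - by rewrite homDZ.
  exact: (coassoc tl).
move=> Y m; apply: homP => h; rewrite Hc_piE.
have l : linear (fun f : C Y Y => eps Y f *: m).
  by move=> k a b; rewrite (@epsL Y) scalerDl scalerA.
under eq_bigr => p _ do rewrite hom_ofE // evalZ.
rewrite -[in RHS](counitR h) hom_sum; apply: eq_bigr => p _; by rewrite homZ.
Qed.


Local Notation alpha := (alpha K A Obj C).
Local Notation beta := (beta K A Obj C delta eps).

Definition bil (sigma : sigmaT K A Obj C) := forall X, bilin (sigma X : C X X -> A -> K^o).

Lemma alpha_in_lin (sigma : sigmaT K A Obj C) (Hs : bil sigma) (M : contramod K Obj C) X
  (m : cM M X) a : linear (fun f : C X X => sigma X f a *: m).
Proof.
by move=> k x y; case: (Hs X) => _ H; rewrite (H a) scalerDl scalerA.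
Qed.

Lemma alpha_mid_lin (sigma : sigmaT K A Obj C) (Hs : bil sigma) (M : contramod K Obj C) X
  (m : cM M X) : linear (fun a => cpi M X X (hom_of (fun f : C X X => sigma X f a *: m))).
Proof.
move=> k x y; rewrite -homDZ; congr (_ _); apply: homP => f.
rewrite evalDZ !hom_ofE; try exact: alpha_in_lin.
by case: (Hs X) => H _; rewrite (H f) scalerDl scalerA.
Qed.

Lemma alphaE (sigma : sigmaT K A Obj C) (Hs : bil sigma) (M : contramod K Obj C) X
  (m : cM M X) a :
  alpha sigma M X m a = cpi M X X (hom_of (fun f : C X X => sigma X f a *: m)).
Proof.
rewrite /Defs.alpha hom_ofE; first by rewrite hom_ofE //; apply: alpha_mid_lin.
move=> k x y; apply: homP => b.
rewrite evalDZ !hom_ofE; try exact: alpha_mid_lin.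
rewrite -homDZ; congr (_ _); apply: homP => f.
rewrite evalDZ !hom_ofE; try exact: alpha_in_lin.
by rewrite scalerDr !scalerA mulrC.
Qed.

Lemma ST_in_lin (M : contramod K Obj C) X Y (G : khom (C X Y) (khom A (cM M Y))) a :
  linear (fun c : C X Y => \sum_(p <- psi X Y c a) G p.2 p.1).
Proof. by case: (psiB (bilin_flip G)) => _ H; apply: H. Qed.

Lemma ST_mid_lin (M : contramod K Obj C) X Y (G : khom (C X Y) (khom A (cM M Y))) :
  linear (fun a => cpi M X Y (hom_of (fun c : C X Y => \sum_(p <- psi X Y c a) G p.2 p.1))).
Proof.
move=> k x y; rewrite -homDZ; congr (_ _); apply: homP => c.
rewrite evalDZ !hom_ofE; try exact: ST_in_lin.
by case: (psiB (bilin_flip G)) => H _; rewrite (H c).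
Qed.

Lemma ST_piE (M : contramod K Obj C) X Y (G : khom (C X Y) (khom A (cM M Y))) a :
  cpi (ST M) X Y G a = cpi M X Y (hom_of (fun c : C X Y => \sum_(p <- psi X Y c a) G p.2 p.1)).
Proof.
rewrite /= hom_ofE; first by rewrite hom_ofE //; apply: ST_mid_lin.
move=> k x y; apply: homP => b.
rewrite evalDZ !hom_ofE; try exact: ST_mid_lin.
rewrite -homDZ; congr (_ _); apply: homP => c.
rewrite evalDZ !hom_ofE; try exact: ST_in_lin.
rewrite scaler_sumr -big_split /=; apply: eq_bigr => p _; by [].
Qed.


Lemma lin_scal (U V : lmodType K) (phi : U -> K^o) (v : V) :
  linear phi -> linear (fun x => phi x *: v).
Proof. by move=> l k x y; rewrite l scalerDl scalerA. Qed.

Lemma lin_scal_hom (U V : lmodType K) (c : K) (g : khom U V) :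
  linear (fun x => c *: g x).
Proof. by move=> k x y; rewrite homDZ scalerDr !scalerA mulrC. Qed.

Lemma alpha_morph (sigma : sigmaT K A Obj C) (Hv : is_V1 K A Obj C delta psi sigma)
  (M : contramod K Obj C) (HM : is_contra M) :
  is_contra_morph M (ST M) (alpha sigma M).
Proof.
case: Hv => Hs HV; case: HM => Hco _.
move=> X Y g; apply: homP => a; rewrite alphaE // ST_piE.
pose g2 := hom_of (fun d : C X X => hom_of (fun c : C X Y => sigma X d a *: g c)).
have g2E : forall d c, g2 d c = sigma X d a *: g c.
  move=> d c; rewrite /g2 hom_ofE; first by rewrite hom_ofE //; apply: lin_scal_hom.
  apply: lin_hom_of => [w|u]; first by apply: lin_scal_hom.
  by apply: lin_scal; case: (Hs X) => _ H; apply: H.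
have lin1 : forall c, linear (fun d : C Y Y =>
      \sum_(q <- psi X Y c a) sigma Y d q.1 *: g q.2).
  move=> c; apply: lin_sumf => q; apply: lin_scal.
  by case: (Hs Y) => _ H; apply: H.
pose g1 := hom_of (fun c : C X Y => hom_of (fun d : C Y Y =>
      \sum_(q <- psi X Y c a) sigma Y d q.1 *: g q.2)).
have g1E : forall c d, g1 c d = \sum_(q <- psi X Y c a) sigma Y d q.1 *: g q.2.
  move=> c d; rewrite /g1 hom_ofE; first by rewrite hom_ofE.
  apply: lin_hom_of => [w|u]; first by apply: lin1.
  have bb : bilin (fun (a' : A) (c' : C X Y) => sigma Y u a' *: g c').
    split=> [a'|c']; first by apply: lin_scal_hom.
    by apply: lin_scal; case: (Hs Y) => H _; apply: H.
  by case: (psiB bb) => _ H; apply: H.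
transitivity (cpi M X X (hom_of (fun d => cpi M X Y (g2 d)))).
  congr (_ _); apply: hom_of_ext => d; rewrite -homZ; congr (_ _).
  by apply: homP => c; rewrite g2E.
rewrite Hco.
transitivity (cpi M X Y (hom_of (fun c => cpi M Y Y (g1 c)))); last first.
  congr (_ _); apply: hom_of_ext => c.
  have GE : forall c', hom_of (fun c0 : C X Y => alpha sigma M Y (g c0)) c' = alpha sigma M Y (g c').
    by move=> c'; rewrite hom_ofE //; apply: lin_comp.
  under eq_bigr => q _ do rewrite GE alphaE //.
  rewrite -hom_sum; congr (_ _); apply: homP => d.
  rewrite eval_sum g1E; apply: eq_bigr => q _.
  by rewrite hom_ofE //; apply: alpha_in_lin.
rewrite Hco; congr (_ _); apply: hom_of_ext => f.
under eq_bigr => p _ do rewrite g2E.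
under [RHS]eq_bigr => p _ do rewrite g1E.
transitivity (g (\sum_(p <- delta X X Y f) sigma X p.2 a *: p.1)).
  by rewrite hom_sum; apply: eq_bigr => p _; rewrite homZ.
rewrite -HV hom_sum; apply: eq_bigr => p _.
by rewrite hom_sum; apply: eq_bigr => q _; rewrite homZ.
Qed.


Lemma alpha_nat (sigma : sigmaT K A Obj C) (Hv : is_V1 K A Obj C delta psi sigma) :
  is_nat K A Obj C delta eps psi (alpha sigma).
Proof.
split; first by move=> M HM; apply: alpha_morph.
case: (Hv) => Hs _.
move=> M N phi HM HN Hphi X m a; rewrite !alphaE // Hphi.
congr (_ _); apply: hom_of_ext => c.
by rewrite hom_ofE ?homZ //; apply: alpha_in_lin.
Qed.

Lemma bil_comb (k : K) (sigma sigma' : sigmaT K A Obj C) :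
  bil sigma -> bil sigma' -> bil (fun Y f a => k * sigma Y f a + sigma' Y f a).
Proof.
move=> Hs Hs' X; case: (Hs X) => H1 H2; case: (Hs' X) => H1' H2'.
split=> [x|y] c u v /=.
  have e1 := H1 x c u v; have e2 := H1' x c u v; rewrite /= in e1 e2.
  rewrite e1 e2 /GRing.scale /=; ring.
have e1 := H2 y c u v; have e2 := H2' y c u v; rewrite /= in e1 e2.
rewrite e1 e2 /GRing.scale /=; ring.
Qed.

Lemma alpha_lin (k : K) (sigma sigma' : sigmaT K A Obj C) :
  is_V1 K A Obj C delta psi sigma -> is_V1 K A Obj C delta psi sigma' ->
  forall M : contramod K Obj C, forall X (m : cM M X),
   alpha (fun Y f a => k * sigma Y f a + sigma' Y f a) M X m
   = k *: alpha sigma M X m + alpha sigma' M X m.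
Proof.
move=> [Hs _] [Hs' _] M X m; apply: homP => a.
rewrite evalDZ !alphaE //; last by apply: bil_comb.
rewrite -homDZ; congr (_ _); apply: homP => f.
have Hc := bil_comb k Hs Hs'.
rewrite evalDZ !hom_ofE; try exact: alpha_in_lin; last by apply: (alpha_in_lin Hc).
by rewrite scalerDl scalerA.
Qed.

Lemma beta_alpha (sigma : sigmaT K A Obj C) :
  is_V1 K A Obj C delta psi sigma ->
  forall X f a, beta (alpha sigma) X f a = sigma X f a.
Proof.
move=> [Hs _] X f a; rewrite /Defs.beta alphaE // Hc_piE.
have HE : forall c, hom_of (fun f0 : C X X => sigma X f0 a *: eps_hom X K^o 1) c
   = sigma X c a *: eps_hom X K^o 1.
  by move=> c; rewrite hom_ofE //; apply: lin_scal; case: (Hs X) => _ H; apply: H.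
under eq_bigr => p _ do rewrite HE evalZ eps_homE.
case: (Hs X) => _ H.
rewrite -[in RHS](counitL f) (lin_sum (H a)); apply: eq_bigr => p _.
rewrite (linZ (H a)).
by rewrite /GRing.scale /= mulr1 mulrC.
Qed.


Lemma scal1K (x : K) : x *: (1 : K^o) = x.
Proof. by rewrite /GRing.scale /= mulr1. Qed.

Lemma beta_bil (tau : natT K A Obj C) : bil (beta tau).
Proof.
move=> X; split=> [f|a] k x y /=; rewrite /Defs.beta.
  by rewrite homDZ evalDZ.
by rewrite homDZ.
Qed.

Lemma tau_eps (tau : natT K A Obj C) (Ht : is_nat K A Obj C delta eps psi tau)
  X (U : lmodType K) (u : U) a f :
  (tau (Hc X U) X (eps_hom X U u) : khom A (khom (C X X) U)) a f
  = beta tau X f a *: u.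
Proof.
pose phi := fun Y => hom_of (fun ph : khom (C Y X) K^o => hom_of (fun c : C Y X => ph c *: u)).
have phiE : forall Y ph c, phi Y ph c = ph c *: u.
  move=> Y ph c; rewrite /phi hom_ofE; first by rewrite hom_ofE //; apply: lin_scal; apply: homL.
  apply: lin_hom_of => [w|c']; first by apply: lin_scal; apply: homL.
  by move=> k x y; rewrite evalDZ scalerDl scalerA.
have Hm : is_contra_morph (Hc X K^o) (Hc X U) phi.
  move=> Y Z g; apply: homP => f0; rewrite phiE !Hc_piE scaler_suml.
  apply: eq_bigr => p _; rewrite hom_ofE ?phiE //.
  exact: (lin_comp (phi Z) g).
have := (proj2 Ht) (Hc X K^o) (Hc X U) phi (Hc_contra X K^o) (Hc_contra X U) Hm X
   (eps_hom X K^o 1) a.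
have -> : phi X (eps_hom X K^o 1) = eps_hom X U u.
  by apply: homP => c; rewrite phiE !eps_homE scal1K.
by move=> ->; rewrite phiE.
Qed.

Lemma alpha_beta (tau : natT K A Obj C) (Ht : is_nat K A Obj C delta eps psi tau)
  (M : contramod K Obj C) (HM : is_contra M) X (m : cM M X) :
  alpha (beta tau) M X m = tau M X m.
Proof.
apply: homP => a; rewrite alphaE; last exact: beta_bil.
case: (HM) => Hco Hcu.
pose Phi := fun Y => hom_of (fun ph : khom (C Y X) K^o =>
   cpi M Y X (hom_of (fun c : C Y X => ph c *: m))).
have lin0 : forall Y (ph : khom (C Y X) K^o), linear (fun c : C Y X => ph c *: m).
  by move=> Y ph; apply: lin_scal; apply: homL.
have PhiE : forall Y ph, Phi Y ph = cpi M Y X (hom_of (fun c : C Y X => ph c *: m)).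
  move=> Y ph; rewrite /Phi hom_ofE // => k x y.
  rewrite -homDZ; congr (_ _); apply: homP => c.
  by rewrite evalDZ !hom_ofE // evalDZ scalerDl scalerA.
have Hm : is_contra_morph (Hc X K^o) M Phi.
  move=> Y Z g; rewrite PhiE.
  pose g' := hom_of (fun c : C Y Z => hom_of (fun d : C Z X => g c d *: m)).
  have g'E : forall c d, g' c d = g c d *: m.
    move=> c d; rewrite /g' hom_ofE; first by rewrite hom_ofE.
    apply: lin_hom_of => [w|d']; first by apply: lin0.
    by move=> k x y; rewrite homDZ evalDZ scalerDl scalerA.
  transitivity (cpi M Y Z (hom_of (fun c => cpi M Z X (g' c)))); last first.
    have HE : forall c, hom_of (fun c0 : C Y Z => Phi Z (g c0)) c = Phi Z (g c).
      by move=> c; rewrite hom_ofE //; exact: lin_comp.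
    congr (_ _); apply: hom_of_ext => c; idtac.
    rewrite PhiE; congr (_ _); apply: homP => d; rewrite g'E hom_ofE //.
  rewrite Hco; congr (_ _); apply: hom_of_ext => f.
  rewrite Hc_piE scaler_suml; apply: eq_bigr => p _; by rewrite g'E.
have E : Phi X (eps_hom X K^o 1) = m.
  rewrite PhiE -[in RHS](Hcu X m); congr (_ _); apply: hom_of_ext => c.
  by rewrite eps_homE scal1K.
rewrite -[in RHS]E ((proj2 Ht) (Hc X K^o) M Phi (Hc_contra X K^o) HM Hm) PhiE.
by [].
Qed.

Lemma beta_V1 (tau : natT K A Obj C) (Ht : is_nat K A Obj C delta eps psi tau) :
  is_V1 K A Obj C delta psi (beta tau).
Proof.
split; first exact: beta_bil.
move=> X Y f a.
pose M := Hc Y (C X Y).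
have lid : linear (fun x : C X Y => x) by [].
pose m : cM M X := hom_of (fun x : C X Y => x).
have mE : forall x, m x = x by move=> x; rewrite /m hom_ofE.
have HM : is_contra M by apply: Hc_contra.
have E1 : (tau M X m : khom A (khom (C X Y) (C X Y))) a f
        = \sum_(p <- delta X X Y f) beta tau X p.2 a *: p.1.
  rewrite -(alpha_beta Ht HM) alphaE; last exact: beta_bil.
  rewrite Hc_piE; apply: eq_bigr => p _.
  rewrite hom_ofE ?evalZ ?mE //.
  by apply: lin_scal; case: (beta_bil tau X) => _ H; apply: H.
rewrite -E1.
pose g := hom_of (eps_hom Y (C X Y)).
have gE : forall c, g c = eps_hom Y (C X Y) c by move=> c; rewrite /g hom_ofE //; apply: eps_homL.
have mE' : m = cpi M X Y g.
  apply: homP => h; rewrite Hc_piE mE -[LHS](counitL h); apply: eq_bigr => p _.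
  by rewrite gE eps_homE.
rewrite mE' ((proj1 Ht) M HM X Y g) ST_piE Hc_piE.
apply: eq_bigr => p _.
rewrite hom_ofE; last first.
  exact: (@ST_in_lin M X Y (hom_of (fun c0 : C X Y => tau M Y (g c0))) a).
rewrite eval_sum; apply: eq_bigr => q _.
rewrite hom_ofE; last exact: (lin_comp (tau M Y) g).
by rewrite gE tau_eps.
Qed.

End Ent.
Unset Implicit Arguments.
Theorem proposition5p4
  (K : fieldType) (A : algType K) (Obj : Type)
  (C : Obj -> Obj -> lmodType K)
  (delta : forall X Y Z : Obj, C X Z -> seq (C Y Z * C X Y))
  (eps : forall X : Obj, C X X -> K)
  (psi : forall X Y : Obj, C X Y -> A -> seq (A * C X Y))
  (Hent : entwining_axioms K A Obj C delta eps psi) :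
  (* alpha maps V_1 into Nat(id, S_psi T_psi) *)
  (forall sigma : sigmaT K A Obj C, is_V1 K A Obj C delta psi sigma ->
     is_nat K A Obj C delta eps psi (alpha K A Obj C sigma))
  /\
  (* alpha is K-linear *)
  (forall (k : K) (sigma sigma' : sigmaT K A Obj C),
     is_V1 K A Obj C delta psi sigma -> is_V1 K A Obj C delta psi sigma' ->
     forall M : contramod K Obj C, is_contra K Obj C delta eps M ->
     forall (X : Obj) (m : cM K Obj C M X),
       alpha K A Obj C (fun Y f a => k * sigma Y f a + sigma' Y f a) M X m
       = k *: alpha K A Obj C sigma M X m + alpha K A Obj C sigma' M X m)
  /\
  (* beta maps Nat(id, S_psi T_psi) into V_1 *)
  (forall tau : natT K A Obj C, is_nat K A Obj C delta eps psi tau ->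
     is_V1 K A Obj C delta psi (beta K A Obj C delta eps tau))
  /\
  (* beta(tau) satisfies (sigma_X, U) = tau(H_X^U)(X) o (eps_X, U) for all U *)
  (forall tau : natT K A Obj C, is_nat K A Obj C delta eps psi tau ->
     forall (X : Obj) (U : lmodType K) (u : U) (a : A) (f : C X X),
       (tau (Hc K Obj C delta X U) X (eps_hom K Obj C eps X U u)
          : khom A (khom (C X X) U)) a f
       = beta K A Obj C delta eps tau X f a *: u)
  /\
  (* beta o alpha = id on V_1 *)
  (forall sigma : sigmaT K A Obj C, is_V1 K A Obj C delta psi sigma ->
     forall (X : Obj) (f : C X X) (a : A),
       beta K A Obj C delta eps (alpha K A Obj C sigma) X f a = sigma X f a)
  /\
  (* alpha o beta = id on Nat(id, S_psi T_psi) *)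
  (forall tau : natT K A Obj C, is_nat K A Obj C delta eps psi tau ->
     forall M : contramod K Obj C, is_contra K Obj C delta eps M ->
     forall (X : Obj) (m : cM K Obj C M X),
       alpha K A Obj C (beta K A Obj C delta eps tau) M X m = tau M X m).
Proof.
split; [|split; [|split; [|split; [|split]]]].
- by move=> sigma Hv; exact: (alpha_nat Hent).
- by move=> k s s' Hs Hs' M _ X m; apply: (@alpha_lin K A Obj C delta psi k s s' Hs Hs' M X m).
- by move=> tau Ht; exact: (beta_V1 Hent).
- by move=> tau Ht X U u a f; exact: (tau_eps Hent).
- by move=> sigma Hv X f a; exact: (beta_alpha Hent).
- by move=> tau Ht M HM X m; exact: (alpha_beta Hent).
Qed.
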